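(* Let $(A_n)_{n\in\mathbb N}$ be a sequence of invertible linear operators on $\mathbb R^d$ and $\|\cdot\|$ a norm on $\mathbb R^d$. The following are equivalent: (1) $(A_n)_{n\in\mathbb N}$ admits a nonuniform strong polynomial dichotomy; (2) there is a sequence of norms $(\|\cdot\|_n)_{n\in\mathbb N}$ on $\mathbb R^d$ such that $(A_n)_{n\in\mathbb N}$ admits a strong polynomial dichotomy with respect to $(\|\cdot\|_n)_{n\in\mathbb N}$ and there exist $C>0$, $\delta\ge0$ with $\|x\|\le\|x\|_n\le Cn^\delta\|x\|$ for all $x\in\mathbb R^d$, $n\in\mathbb N$.
   Context: $\mathbb N=\{1,2,\dots\}$. $\mathcal A(m,n)=A_{m-1}\cdots A_n$ ($m>n$), $\mathrm{Id}$ ($m=n$), $A_m^{-1}\cdots A_{n-1}^{-1}$ ($m<n$). Nonuniform strong polynomial dichotomy: there exist $K>0$, $a\ge\lambda>0$, $\varepsilon\ge0$ and projections $P_n$ with $A_nP_n=P_{n+1}A_n$ such that for all $m\ge n$ in $\mathbb N$, with $Q_m=\mathrm{Id}-P_m$: $\|\mathcal A(m,n)P_n\|\le K(m/n)^{-\lambda}n^\varepsilon$, $\|\mathcal A(n,m)Q_m\|\le K(m/n)^{-\lambda}m^\varepsilon$, $\|\mathcal A(m,n)\|\le K(m/n)^an^\varepsilon$, $\|\mathcal A(n,m)\|\le K(m/n)^am^\varepsilon$ (operator norms induced by $\|\cdot\|$). Strong polynomial dichotomy w.r.t. $(\|\cdot\|_n)$: there exist $K>0$, $a\ge\lambda>0$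 and projections $P_n$ with $A_nP_n=P_{n+1}A_n$ such that for $m\ge n$, $x\in\mathbb R^d$: $\|\mathcal A(m,n)P_nx\|_m\le K(m/n)^{-\lambda}\|x\|_n$, $\|\mathcal A(n,m)Q_mx\|_n\le K(m/n)^{-\lambda}\|x\|_m$, $\|\mathcal A(m,n)x\|_m\le K(m/n)^a\|x\|_n$, $\|\mathcal A(n,m)x\|_n\le K(m/n)^a\|x\|_m$. *)

(* Defs.v *)
From HB Require Import structures.
From mathcomp Require Import all_boot all_order all_algebra.
From mathcomp Require Import all_classical all_reals all_analysis.
Set Implicit Arguments. Unset Strict Implicit. Unset Printing Implicit Defensive.
Import Order.TTheory GRing.Theory Num.Theory.
Local Open Scope ring_scope.
Local Open Scope classical_set_scope.

Definition is_norm (R : realType) (d : nat) (N : 'cV[R]_d -> R) : Prop :=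
  [/\ forall x y, N (x + y) <= N x + N y,
      forall (a : R) x, N (a *: x) = `|a| * N x &
      forall x, N x = 0 -> x = 0].

Definition opnorm (R : realType) (d : nat) (N : 'cV[R]_d -> R) (M : 'M[R]_d) : R :=
  sup [set N (M *m x) | x in [set x | N x <= 1]].

(* fwd A k n = A_{n+k-1} ... A_n  (empty product = identity). *)
Fixpoint fwd (R : realType) (d : nat) (A : nat -> 'M[R]_d) (k n : nat) : 'M[R]_d :=
  match k with
  | 0 => 1%:M
  | k'.+1 => A (n + k')%N *m fwd A k' n
  end.

(* bwd A k m = A_m^{-1} ... A_{m+k-1}^{-1}. *)
Fixpoint bwd (R : realType) (d : nat) (A : nat -> 'M[R]_d) (k m : nat) : 'M[R]_d :=
  match k with
  | 0 => 1%:M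
  | k'.+1 => bwd A k' m *m invmx (A (m + k')%N)
  end.

Definition cocycle (R : realType) (d : nat) (A : nat -> 'M[R]_d) (m n : nat) : 'M[R]_d :=
  if (n <= m)%N then fwd A (m - n) n else bwd A (n - m) m.

Definition invariant_projections (R : realType) (d : nat)
    (A : nat -> 'M[R]_d) (P : nat -> 'M[R]_d) : Prop :=
  forall n, (1 <= n)%N -> P n *m P n = P n /\ A n *m P n = P n.+1 *m A n.

Definition nonuniform_strong_poly_dichotomy (R : realType) (d : nat)
    (N : 'cV[R]_d -> R) (A : nat -> 'M[R]_d) : Prop :=
  exists (K a lam eps : R) (P : nat -> 'M[R]_d),
    [/\ 0 < K, 0 < lam, lam <= a, 0 <= eps &
        invariant_projections A P] /\
        forall m n : nat, (1 <= n)%N -> (n <= m)%N ->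
          let r := (m%:R / n%:R : R) in
          [/\ opnorm N (cocycle A m n *m P n)
                <= K * powR r (- lam) * powR n%:R eps,
              opnorm N (cocycle A n m *m (1%:M - P m))
                <= K * powR r (- lam) * powR m%:R eps,
              opnorm N (cocycle A m n) <= K * powR r a * powR n%:R eps &
              opnorm N (cocycle A n m) <= K * powR r a * powR m%:R eps].

Definition strong_poly_dichotomy_wrt (R : realType) (d : nat)
    (Ns : nat -> 'cV[R]_d -> R) (A : nat -> 'M[R]_d) : Prop :=
  exists (K a lam : R) (P : nat -> 'M[R]_d),
    [/\ 0 < K, 0 < lam, lam <= a &
        invariant_projections A P] /\
        forall (m n : nat) (x : 'cV[R]_d), (1 <= n)%N -> (n <= m)%N ->
          let r := (m%:R / n%:R : R) in
          [/\ Ns m (cocycle A m n *m P n *m x) <= K * powR r (- lam) * Ns n x,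
              Ns n (cocycle A n m *m (1%:M - P m) *m x) <= K * powR r (- lam) * Ns m x,
              Ns m (cocycle A m n *m x) <= K * powR r a * Ns n x &
              Ns n (cocycle A n m *m x) <= K * powR r a * Ns m x].

(* Main.v *)
Require Import Defs.
From HB Require Import structures.
From mathcomp Require Import all_boot all_order all_algebra.
From mathcomp Require Import all_classical all_reals all_analysis.
From mathcomp Require Import ring lra zify.
Set Implicit Arguments. Unset Strict Implicit. Unset Printing Implicit Defensive.
Import Order.TTheory GRing.Theory Num.Theory.
Import numFieldNormedType.Exports numFieldTopology.Exports.
Local Open Scope ring_scope.
Local Open Scope classical_set_scope.
Lemma trmx_norm_le (R : realType) m n (M : 'M[R]_(m, n)) : `|M^T| <= `|M|.
Proof.
rewrite [leLHS]/Num.norm [leRHS]/Num.norm /= !mx_normrE.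
apply/bigmax_leP; split.
  by apply/bigmax_geP; left.
move=> ij _; rewrite mxE; apply/bigmax_geP; right; exists (ij.2, ij.1) => //.
Qed.

Lemma trmx_norm (R : realType) m n (M : 'M[R]_(m, n)) : `|M^T| = `|M|.
Proof.
apply/eqP; rewrite eq_le trmx_norm_le /=.
by rewrite -{1}(trmxK M) trmx_norm_le.
Qed.

Section NormBasics.
Variables (R : realType) (d : nat) (N : 'cV[R]_d -> R).
Hypothesis hN : is_norm N.

Lemma N0 : N 0 = 0.
Proof. case: hN => _ hZ _. by rewrite -(scale0r 0) hZ normr0 mul0r. Qed.

Lemma NN x : N (- x) = N x.
Proof. case: hN => _ hZ _. by rewrite -scaleN1r hZ normrN normr1 mul1r. Qed.

Lemma Nge0 x : 0 <= N x.
Proof.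
case: hN => hT _ _. have := hT x (- x). rewrite subrr N0 NN. lra.
Qed.

Lemma NZ (a : R) x : N (a *: x) = `|a| * N x.
Proof. by case: hN => _ + _; apply. Qed.

Lemma ND x y : N (x + y) <= N x + N y.
Proof. by case: hN => + _ _; apply. Qed.

Lemma Neq0 x : N x = 0 -> x = 0.
Proof. by case: hN => _ _; apply. Qed.

Lemma N_sum (I : Type) (r : seq I) (P : pred I) (F : I -> 'cV[R]_d) :
  N (\sum_(i <- r | P i) F i) <= \sum_(i <- r | P i) N (F i).
Proof.
elim/big_ind2: _ => [|x1 x2 y1 y2 h1 h2|i _]; first by rewrite N0.
- apply: le_trans (ND _ _) _. exact: lerD.
- by [].
Qed.

Lemma mulmx_sum_col' (M : 'M[R]_d) (x : 'cV[R]_d) :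
  M *m x = \sum_j x j 0 *: col j M.
Proof.
apply/matrixP => i k; rewrite !mxE summxE; apply: eq_bigr => j _.
by rewrite !mxE (ord1 k) mulrC.
Qed.

Lemma entry_le_norm (x : 'cV[R]_d) j : `|x j 0| <= `|x|.
Proof.
rewrite [leRHS]/Num.norm /= mx_normrE.
have /mapP[ij Hij ->] : `|x j 0| \in [seq `|x ij.1 ij.2| | ij : 'I_d * 'I_1].
  by apply/mapP; exists (j, 0) => //=; rewrite mem_enum.
by apply/bigmax_geP; right; exists ij.
Qed.

Lemma N_mul_bound (M : 'M[R]_d) (x : 'cV[R]_d) :
  N (M *m x) <= (\sum_j N (col j M)) * `|x|.
Proof.
rewrite mulmx_sum_col' mulr_suml. apply: le_trans; first exact: N_sum.
apply: ler_sum => j _. rewrite NZ mulrC. apply: ler_wpM2l; first exact: Nge0.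
exact: entry_le_norm.
Qed.


Lemma N_rev x y : `|N x - N y| <= N (x - y).
Proof.
rewrite ler_norml; apply/andP; split.
- have := ND (y - x) x. rewrite subrK -(NN (y - x)) opprB. lra.
- have := ND (x - y) y. rewrite subrK. lra.
Qed.

Let B1 := \sum_j N (col j (1%:M : 'M[R]_d)).

Lemma N_le_B1 x : N x <= B1 * `|x|.
Proof. by rewrite -{1}(mul1mx x); exact: N_mul_bound. Qed.

Lemma B1_ge0 : 0 <= B1.
Proof. by apply: sumr_ge0 => j _; exact: Nge0. Qed.

Lemma fT_continuous : continuous (fun v : 'rV[R]_d => N v^T).
Proof.
move=> v; apply/(@cvgrPdist_lt _ _ _ _ (nbhs_filter v)) => e e0.
have he : 0 < e / (B1 + 1).
  by apply: divr_gt0 => //; have := B1_ge0; lra.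
apply: (proj2 (@nbhs_normP R (matrix R 1 d : normedModType R) v _)); exists (e / (B1 + 1)) => //= t ht.
apply: le_lt_trans; first exact: N_rev.
rewrite -linearB /=. apply: le_lt_trans; first exact: N_le_B1.
rewrite trmx_norm.
apply: (@le_lt_trans _ _ ((B1 + 1) * `|v - t|)).
  by apply: ler_wpM2r => //; lra.
rewrite -ltr_pdivlMl; last by have := B1_ge0; lra.
by rewrite mulrC.
Qed.

Lemma norm_equiv : exists2 c : R, 0 < c & forall x, c * `|x| <= N x.
Proof.
set A := [set v : 'rV[R]_d | `|v| = 1].
have cA : compact A.
  apply: bounded_closed_compact.
  - exists 1; split; first by [].
    by move=> M M1 v; rewrite /A /= => ->; exact: ltW.
  - exact: (proj1 (continuous_closedP (@Num.norm R (matrix R 1 d : normedModType R))) (@norm_continuous _ _) _ (@closed_eq R 1)).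
have inA x : x != 0 -> A (`|x|^-1 *: x^T).
  move=> x0; rewrite /A /= normrZ trmx_norm normfV normr_id mulVf //.
  by rewrite normr_eq0.
case: (pselect (A !=set0)) => [A0 | A0]; last first.
  exists 1 => // x; have [->|x0] := eqVneq x 0.
    by rewrite normr0 mulr0; exact: Nge0.
  by exfalso; apply: A0; exists (`|x|^-1 *: x^T); exact: inA.
have fc : {within A, continuous (fun v : 'rV[R]_d => N v^T)}.
  by apply: continuous_subspaceT; exact: fT_continuous.
have [c cinA hc] := compact_EVT_min A0 cA fc.
have Ac : A c by rewrite inE in cinA.
have c0 : 0 < N c^T.
  rewrite lt_neqAle Nge0 andbT; apply/eqP => /esym /Neq0 /eqP.
  rewrite trmx_eq0 => /eqP c0; move: Ac; rewrite /A /= c0 normr0.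
  by move/eqP; rewrite eq_sym oner_eq0.
exists (N c^T) => // x; have [->|x0] := eqVneq x 0.
  by rewrite normr0 mulr0; exact: Nge0.
have := hc _ (mem_set (inA _ x0)).
rewrite linearZ /= trmxK NZ normfV normr_id.
have xp : 0 < `|x| by rewrite normr_gt0.
by rewrite ler_pdivlMl // mulrC.
Qed.

End NormBasics.
Section Cocycle.
Variables (R : realType) (d : nat) (A : nat -> 'M[R]_d).
Hypothesis hA : forall n, (1 <= n)%N -> A n \in unitmx.

Lemma fwd_add j i m : fwd A (j + i) m = fwd A j (m + i) *m fwd A i m.
Proof.
elim: j => [|j IH] /=; first by rewrite mul1mx.
by rewrite IH mulmxA -addnA (addnC j i).
Qed.

Lemma fwd_unit j n : (1 <= n)%N -> fwd A j n \in unitmx.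
Proof.
move=> n1; elim: j => [|j IH] /=; first exact: unitmx1.
by rewrite unitmx_mul IH andbT hA // (leq_trans n1) // leq_addr.
Qed.

Lemma bwd_fwd j m : (1 <= m)%N -> bwd A j m *m fwd A j m = 1%:M.
Proof.
move=> m1; elim: j => [|j IH] /=; first by rewrite mul1mx.
rewrite -mulmxA (mulmxA (invmx _)) mulVmx ?mul1mx //.
by rewrite hA // (leq_trans m1) // leq_addr.
Qed.

Definition G k := fwd A k.-1 1.

Lemma G_unit k : G k \in unitmx.
Proof. exact: fwd_unit. Qed.

Lemma G_split k n : (1 <= n)%N -> (n <= k)%N -> G k = fwd A (k - n) n *m G n.
Proof.
move=> n1 nk; rewrite /G.
have -> : fwd A (k - n) n = fwd A (k - n) (1 + n.-1) by rewrite add1n prednK.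
rewrite -fwd_add; congr fwd; lia.
Qed.

Lemma cocycleG k n : (1 <= k)%N -> (1 <= n)%N ->
  cocycle A k n = G k *m invmx (G n).
Proof.
move=> k1 n1; rewrite /cocycle; case: leqP => nk.
  by rewrite (@G_split k n n1 nk) -mulmxA mulmxV ?mulmx1 // G_unit.
have kn : (k <= n)%N by exact: ltnW.
apply: (canRL (mulmxK (G_unit n))).
by rewrite (@G_split n k k1 kn) mulmxA bwd_fwd // mul1mx.
Qed.

Lemma coc_mul k m n : (1 <= k)%N -> (1 <= m)%N -> (1 <= n)%N ->
  cocycle A k m *m cocycle A m n = cocycle A k n.
Proof.
move=> k1 m1 n1; rewrite !cocycleG //.
by rewrite -mulmxA (mulmxA (invmx _)) mulVmx ?mul1mx // G_unit.
Qed.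

Lemma coc_id n : cocycle A n n = 1%:M.
Proof. by rewrite /cocycle leqnn subnn. Qed.

Variable P : nat -> 'M[R]_d.
Hypothesis hP : invariant_projections A P.

Lemma PG k : (1 <= k)%N -> P k *m G k = G k *m P 1.
Proof.
case: k => // k _; elim: k => [|k IH]; first by rewrite /G /= mul1mx mulmx1.
rewrite /G /= add1n mulmxA -(proj2 (@hP (k.+1) isT)) -mulmxA.
by rewrite -/(G k.+1) IH mulmxA.
Qed.

Lemma coc_P k n : (1 <= k)%N -> (1 <= n)%N ->
  cocycle A k n *m P n = P k *m cocycle A k n.
Proof.
move=> k1 n1; rewrite !cocycleG //.
have e : invmx (G n) *m P n = P 1 *m invmx (G n).
  have := @PG n n1 => /(congr1 (fun M => invmx (G n) *m M *m invmx (G n))).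
  rewrite !mulmxA mulVmx ?G_unit // mul1mx -(mulmxA _ (G n)) mulmxV ?G_unit //.
  by rewrite mulmx1.
by rewrite -mulmxA e !mulmxA (@PG k k1).
Qed.

Lemma coc_Q k n : (1 <= k)%N -> (1 <= n)%N ->
  cocycle A k n *m (1%:M - P n) = (1%:M - P k) *m cocycle A k n.
Proof.
move=> k1 n1; by rewrite mulmxBr mulmxBl mulmx1 mul1mx coc_P.
Qed.

End Cocycle.
Lemma pneg {R : realType} {u v : R} : 0 <= u -> v < 0 -> u * v <= 0.
Proof. by move=> hu hv; rewrite mulr_ge0_le0 // ltW. Qed.

Ltac prods h1 h2 := repeat match goal with
 | H : is_true (0 <= ?e) |- _ => have := mulr_ge0 h1 H; have := mulr_ge0 h2 H; move: H
 | H : is_true (?e < 0) |- _ => have := pneg h1 H; have := pneg h2 H; move: H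
 end; move=> *.

Ltac splitmax2 h1 h2 := rewrite /Num.max /Num.min;
  repeat (let H := fresh "H" in case: ifPn => H; [ (have := pneg h1 H; have := pneg h2 H; move: H)
     | (rewrite -leNgt in H; have := mulr_ge0 h1 H; have := mulr_ge0 h2 H; move: H) ]; move=> * ).

Section W.
Variables (R : realType) (lam a x y z : R).
Hypotheses (hl : 0 < lam) (hla : lam <= a) (hzy : z <= y).

Lemma hint1 : 0 <= (a - lam) * (y - z).
Proof. by apply: mulr_ge0; rewrite subr_ge0. Qed.
Lemma hint2 : 0 <= lam * (y - z).
Proof. by apply: mulr_ge0; rewrite ?subr_ge0 // ltW. Qed.

Let hal : 0 <= a - lam. Proof. by rewrite subr_ge0. Qed.
Let hl' : 0 <= lam. Proof. exact: ltW. Qed.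

Definition eS t : R := lam * Num.max t 0 + a * Num.min t 0.
Definition eU t : R := - (lam * Num.min t 0) - a * Num.max t 0.

Lemma W1 : eS (x - y) <= - lam * (y - z) + eS (x - z).
Proof. rewrite /eS; splitmax2 hal hl'. all: have := hint1; have := hint2; lra. Qed.
Lemma W2 : eU (x - z) <= - lam * (y - z) + eU (x - y).
Proof. rewrite /eU; splitmax2 hal hl'. all: have := hint1; have := hint2; lra. Qed.
Lemma W3 : eS (x - y) <= a * (y - z) + eS (x - z).
Proof. rewrite /eS; splitmax2 hal hl'. all: have := hint1; have := hint2; lra. Qed.
Lemma W4 : eU (x - y) <= a * (y - z) + eU (x - z).
Proof. rewrite /eU; splitmax2 hal hl'. all: have := hint1; have := hint2; lra. Qed.
Lemma W5 : eS (x - z) <= a * (y - z) + eS (x - y).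
Proof. rewrite /eS; splitmax2 hal hl'. all: have := hint1; have := hint2; lra. Qed.
Lemma W6 : eU (x - z) <= a * (y - z) + eU (x - y).
Proof. rewrite /eU; splitmax2 hal hl'. all: have := hint1; have := hint2; lra. Qed.
End W.

Section SUP.
Variable R : realType.

Definition SUP (f : nat -> R) := sup [set f k | k in [set k : nat | (1 <= k)%N]].

Lemma SUP_ub (f : nat -> R) B : (forall k, (1 <= k)%N -> f k <= B) ->
  forall k, (1 <= k)%N -> f k <= SUP f.
Proof.
move=> hB k k1; apply: sup_upper_bound; last by exists k.
split; first by exists (f 1%N), 1%N.
by exists B => _ [j j1 <-]; exact: hB.
Qed.

Lemma SUP_le (f : nat -> R) B : (forall k, (1 <= k)%N -> f k <= B) -> SUP f <= B.
Proof.
move=> hB; apply: ge_sup; first by exists (f 1%N), 1%N.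
by move=> _ [j j1 <-]; exact: hB.
Qed.

Lemma SUP_ge0 (f : nat -> R) B : (forall k, (1 <= k)%N -> f k <= B) ->
  (forall k, (1 <= k)%N -> 0 <= f k) -> 0 <= SUP f.
Proof.
move=> hB h0; have h1 := h0 1%N isT; have h2 := @SUP_ub f B hB 1%N isT. exact: le_trans h1 h2.
Qed.

Lemma SUP_scale (f g : nat -> R) c B : 0 <= c ->
  (forall k, (1 <= k)%N -> g k <= B) ->
  (forall k, (1 <= k)%N -> f k <= c * g k) -> SUP f <= c * SUP g.
Proof.
move=> c0 hB hfg; apply: SUP_le => k k1; apply: le_trans (hfg k k1) _.
by apply: ler_wpM2l => //; exact: (@SUP_ub g B hB k k1).
Qed.

End SUP.

Section OpNorm.
Variables (R : realType) (d : nat) (N : 'cV[R]_d -> R).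
Hypothesis hN : is_norm N.

Lemma N_op_bound (M : 'M[R]_d) : exists2 B, 0 <= B & forall x, N (M *m x) <= B * N x.
Proof.
have [c c0 hc] := norm_equiv hN.
exists ((\sum_j N (col j M)) / c).
  by apply: divr_ge0; [apply: sumr_ge0 => j _; exact: Nge0 | exact: ltW].
move=> x; apply: le_trans (N_mul_bound hN M x) _.
rewrite -mulrA ler_wpM2l //; first by apply: sumr_ge0 => j _; exact: Nge0.
by rewrite mulrC ler_pdivlMr // mulrC.
Qed.

Lemma opnorm_le (M : 'M[R]_d) x : N (M *m x) <= opnorm N M * N x.
Proof.
have [B B0 hB] := N_op_bound M.
have hs : has_sup [set N (M *m x) | x in [set x | N x <= 1]].
  split; first by exists (N (M *m 0)), 0 => //=; rewrite N0.
  exists B => _ [y /= y1 <-]; apply: le_trans (hB y) _.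
  by rewrite -[leRHS]mulr1 ler_wpM2l.
have [x0|x0] := eqVneq (N x) 0.
  by rewrite x0 mulr0 (Neq0 hN x0) mulmx0 N0.
have xp : 0 < N x by rewrite lt_neqAle eq_sym x0 Nge0.
have hy : [set N (M *m x) | x in [set x | N x <= 1]] (N (M *m ((N x)^-1 *: x))).
  exists ((N x)^-1 *: x); last by [].
  by rewrite /= NZ // normfV (ger0_norm (ltW xp)) mulVf.
have := sup_upper_bound hs hy.
rewrite -scalemxAr NZ // normfV (ger0_norm (ltW xp)) -/(opnorm N M) => h.
by rewrite -ler_pdivrMr // mulrC.
Qed.

Lemma opnorm_ub (M : 'M[R]_d) b : 0 <= b -> (forall x, N (M *m x) <= b * N x) ->
  opnorm N M <= b.
Proof.
move=> b0 hb; apply: ge_sup; first by exists (N (M *m 0)), 0 => //=; rewrite N0.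
move=> _ [y /= y1 <-]; apply: le_trans (hb y) _.
by rewrite -[leRHS]mulr1 ler_wpM2l.
Qed.

End OpNorm.

Section Logs.
Variable R : realType.
Definition Lg (k : nat) : R := ln (k%:R : R).

Lemma Lg_le i j : (1 <= i)%N -> (i <= j)%N -> Lg i <= Lg j.
Proof.
move=> i1 ij; rewrite /Lg ler_ln ?ler_nat // posrE ltr0n //.
exact: leq_trans ij.
Qed.

Lemma Lg_ge0 i : (1 <= i)%N -> 0 <= Lg i.
Proof. by move=> i1; rewrite /Lg ln_ge0 // ler1n. Qed.

Lemma powR_ratio (p : R) m n : (1 <= m)%N -> (1 <= n)%N ->
  powR (m%:R / n%:R) p = expR (p * (Lg m - Lg n)).
Proof.
move=> m1 n1; rewrite /powR ifF; last first.
  apply/negbTE; rewrite mulf_neq0 // ?invr_eq0 pnatr_eq0; lia.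
rewrite lnM ?lnV // ?posrE ?invr_gt0 ?ltr0n //.
Qed.

Lemma powR_nat (p : R) n : (1 <= n)%N -> powR (n%:R) p = expR (p * Lg n).
Proof.
move=> n1; rewrite /powR ifF //; apply/negbTE; rewrite pnatr_eq0; lia.
Qed.

End Logs.

Lemma expR_sum1 (R : realType) (u v : R) : u + v = 0 -> expR u * expR v = 1.
Proof. by move=> h; rewrite -expRD h expR0. Qed.

Lemma eS_pos (R : realType) (lam a t : R) : 0 <= t -> eS lam a t = lam * t.
Proof.
move=> t0; rewrite /eS /Num.max /Num.min ltNge t0 /=. lra.
Qed.

Lemma eS_neg (R : realType) (lam a t : R) : t <= 0 -> eS lam a t = a * t.
Proof.
move=> t0; rewrite /eS /Num.max /Num.min.
case: ifPn => h; first lra.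
have -> : t = 0 by apply/eqP; rewrite eq_le t0 /= leNgt.
lra.
Qed.

Lemma eU_pos (R : realType) (lam a t : R) : 0 <= t -> eU lam a t = - (a * t).
Proof.
move=> t0; rewrite /eU /Num.max /Num.min ltNge t0 /=. lra.
Qed.

Lemma eU_neg (R : realType) (lam a t : R) : t <= 0 -> eU lam a t = - (lam * t).
Proof.
move=> t0; rewrite /eU /Num.max /Num.min.
case: ifPn => h; first lra.
have -> : t = 0 by apply/eqP; rewrite eq_le t0 /= leNgt.
lra.
Qed.

Lemma final_ineq (R : realType) (K u : R) : 0 < K -> 1 <= u ->
  K * u * (1 + K * u) + K * u * (1 + K * u) <= 2 * (K * (1 + K)) * (u * u).
Proof.
move=> hK e1.
have h1 : 0 <= K * K * u * (u - 1).
  by apply: mulr_ge0; [apply: mulr_ge0; [apply: mulr_ge0; lra | lra] | lra].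
have h2 : 0 <= K * u * (u - 1).
  by apply: mulr_ge0; [apply: mulr_ge0; lra | lra].
nra.
Qed.

Local Close Scope classical_set_scope.
Section Fwd.
Variables (R : realType) (d : nat) (A : nat -> 'M[R]_d) (N : 'cV[R]_d -> R).
Hypothesis hA : forall n, (1 <= n)%N -> A n \in unitmx.
Hypothesis hN : is_norm N.
Variables (K a lam eps : R) (P : nat -> 'M[R]_d).
Hypotheses (hK : 0 < K) (hlam : 0 < lam) (hla : lam <= a) (heps : 0 <= eps).
Hypothesis hP : invariant_projections A P.
Hypothesis H : forall m n : nat, (1 <= n)%N -> (n <= m)%N ->
          let r := (m%:R / n%:R : R) in
          [/\ opnorm N (cocycle A m n *m P n)
                <= K * powR r (- lam) * powR n%:R eps,
              opnorm N (cocycle A n m *m (1%:M - P m))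
                <= K * powR r (- lam) * powR m%:R eps,
              opnorm N (cocycle A m n) <= K * powR r a * powR n%:R eps &
              opnorm N (cocycle A n m) <= K * powR r a * powR m%:R eps].

Local Notation C := (cocycle A).
Definition E n : R := expR (eps * Lg R n).
Definition pw (p : R) m n : R := expR (p * (Lg R m - Lg R n)).

Lemma E_ge1 n : (1 <= n)%N -> 1 <= E n.
Proof.
move=> n1; apply: le_trans (expR_ge1Dx _); rewrite lerDl.
by apply: mulr_ge0 => //; exact: Lg_ge0.
Qed.

Lemma pw_nn p n : pw p n n = 1.
Proof. by rewrite /pw subrr mulr0 expR0. Qed.

Lemma c1 m n x : (1 <= n)%N -> (n <= m)%N ->
  N (C m n *m (P n *m x)) <= K * pw (- lam) m n * E n * N x.
Proof.
move=> n1 nm; rewrite mulmxA; apply: le_trans (opnorm_le hN _ x) _.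
apply: ler_wpM2r; first exact: Nge0.
have [h _ _ _] := H n1 nm.
by rewrite /= powR_ratio ?powR_nat // (leq_trans n1 nm) in h.
Qed.

Lemma c2 m n x : (1 <= n)%N -> (n <= m)%N ->
  N (C n m *m ((1%:M - P m) *m x)) <= K * pw (- lam) m n * E m * N x.
Proof.
move=> n1 nm; rewrite mulmxA; apply: le_trans (opnorm_le hN _ x) _.
apply: ler_wpM2r; first exact: Nge0.
have [_ h _ _] := H n1 nm.
by rewrite /= powR_ratio ?powR_nat // (leq_trans n1 nm) in h.
Qed.

Lemma c3 m n x : (1 <= n)%N -> (n <= m)%N ->
  N (C m n *m x) <= K * pw a m n * E n * N x.
Proof.
move=> n1 nm; apply: le_trans (opnorm_le hN _ x) _.
apply: ler_wpM2r; first exact: Nge0.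
have [_ _ h _] := H n1 nm.
by rewrite /= powR_ratio ?powR_nat // (leq_trans n1 nm) in h.
Qed.

Lemma c4 m n x : (1 <= n)%N -> (n <= m)%N ->
  N (C n m *m x) <= K * pw a m n * E m * N x.
Proof.
move=> n1 nm; apply: le_trans (opnorm_le hN _ x) _.
apply: ler_wpM2r; first exact: Nge0.
have [_ _ _ h] := H n1 nm.
by rewrite /= powR_ratio ?powR_nat // (leq_trans n1 nm) in h.
Qed.


Definition wS k n : R := expR (eS lam a (Lg R k - Lg R n)).
Definition wU k n : R := expR (eU lam a (Lg R k - Lg R n)).
Definition TS n x k : R := N (C k n *m (P n *m x)) * wS k n.
Definition TU n x k : R := N (C k n *m ((1%:M - P n) *m x)) * wU k n.
Definition Ns n x : R := SUP (TS n x) + SUP (TU n x).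
Definition Bn n : R := K * E n * (1 + K * E n).

Lemma KE_ge0 n : 0 <= K * E n.
Proof. by apply: mulr_ge0; [exact: ltW | exact: expR_ge0]. Qed.

Lemma aux1 (u v : R) : 0 <= u -> 0 <= v -> u * v <= u * (1 + u) * v.
Proof. move=> u0 v0; have := mulr_ge0 (mulr_ge0 u0 u0) v0. nra. Qed.

Lemma aux2 (u v : R) : 0 <= u -> 0 <= v -> u * (u * v) <= u * (1 + u) * v.
Proof. move=> u0 v0; have := mulr_ge0 u0 v0. nra. Qed.

Lemma NP_bound n x : (1 <= n)%N -> N (P n *m x) <= K * E n * N x.
Proof.
move=> n1; have := c1 x n1 (leqnn n).
by rewrite coc_id mul1mx pw_nn mulr1.
Qed.

Lemma NQ_bound n x : (1 <= n)%N -> N ((1%:M - P n) *m x) <= K * E n * N x.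
Proof.
move=> n1; have := c2 x n1 (leqnn n).
by rewrite coc_id mul1mx pw_nn mulr1.
Qed.

Lemma TS_bound n x k : (1 <= n)%N -> (1 <= k)%N -> TS n x k <= Bn n * N x.
Proof.
move=> n1 k1; rewrite /TS /Bn; case: (leqP n k) => nk.
- have h := c1 x n1 nk.
  have e : pw (- lam) k n * wS k n = 1.
    rewrite /pw /wS eS_pos ?subr_ge0 ?Lg_le //; apply: expR_sum1; ring.
  apply: le_trans (ler_wpM2r (expR_ge0 _) h) _.
  rewrite (_ : K * pw (- lam) k n * E n * N x * wS k n = K * E n * N x * (pw (- lam) k n * wS k n)); last by ring.
  rewrite e mulr1; apply: aux1; [exact: KE_ge0 | exact: Nge0].
- have kn : (k <= n)%N by exact: ltnW.
  have h := c4 (P n *m x) k1 kn.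
  have e : pw a n k * wS k n = 1.
    rewrite /pw /wS eS_neg; last by rewrite subr_le0 Lg_le.
    apply: expR_sum1; ring.
  apply: le_trans (ler_wpM2r (expR_ge0 _) h) _.
  rewrite (_ : K * pw a n k * E n * N (P n *m x) * wS k n = K * E n * N (P n *m x) * (pw a n k * wS k n)); last by ring.
  rewrite e mulr1; apply: le_trans (aux2 (KE_ge0 n) (Nge0 hN x)).
  by apply: ler_wpM2l; [exact: KE_ge0 | exact: NP_bound].
Qed.

Lemma TU_bound n x k : (1 <= n)%N -> (1 <= k)%N -> TU n x k <= Bn n * N x.
Proof.
move=> n1 k1; rewrite /TU /Bn; case: (leqP k n) => kn.
- have h := c2 x k1 kn.
  have e : pw (- lam) n k * wU k n = 1.
    rewrite /pw /wU eU_neg; last by rewrite subr_le0 Lg_le.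
    apply: expR_sum1; ring.
  apply: le_trans (ler_wpM2r (expR_ge0 _) h) _.
  rewrite (_ : K * pw (- lam) n k * E n * N x * wU k n = K * E n * N x * (pw (- lam) n k * wU k n)); last by ring.
  rewrite e mulr1; apply: aux1; [exact: KE_ge0 | exact: Nge0].
- have nk : (n <= k)%N by exact: ltnW.
  have h := c3 ((1%:M - P n) *m x) n1 nk.
  have e : pw a k n * wU k n = 1.
    rewrite /pw /wU eU_pos ?subr_ge0 ?Lg_le //; apply: expR_sum1; ring.
  apply: le_trans (ler_wpM2r (expR_ge0 _) h) _.
  rewrite (_ : K * pw a k n * E n * N ((1%:M - P n) *m x) * wU k n = K * E n * N ((1%:M - P n) *m x) * (pw a k n * wU k n)); last by ring.
  rewrite e mulr1; apply: le_trans (aux2 (KE_ge0 n) (Nge0 hN x)).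
  by apply: ler_wpM2l; [exact: KE_ge0 | exact: NQ_bound].
Qed.

Lemma TS_ge0 n x k : 0 <= TS n x k.
Proof. by apply: mulr_ge0; [exact: Nge0 | exact: expR_ge0]. Qed.

Lemma TU_ge0 n x k : 0 <= TU n x k.
Proof. by apply: mulr_ge0; [exact: Nge0 | exact: expR_ge0]. Qed.

Lemma SUPS_ub n x k : (1 <= n)%N -> (1 <= k)%N -> TS n x k <= SUP (TS n x).
Proof. by move=> n1 k1; apply: (@SUP_ub _ _ (Bn n * N x)) => // j j1; exact: TS_bound. Qed.

Lemma SUPU_ub n x k : (1 <= n)%N -> (1 <= k)%N -> TU n x k <= SUP (TU n x).
Proof. by move=> n1 k1; apply: (@SUP_ub _ _ (Bn n * N x)) => // j j1; exact: TU_bound. Qed.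

Lemma SUPS_ge0 n x : (1 <= n)%N -> 0 <= SUP (TS n x).
Proof. by move=> n1; apply: le_trans (SUPS_ub x n1 (isT : (1 <= 1)%N)); exact: TS_ge0. Qed.

Lemma SUPU_ge0 n x : (1 <= n)%N -> 0 <= SUP (TU n x).
Proof. by move=> n1; apply: le_trans (SUPU_ub x n1 (isT : (1 <= 1)%N)); exact: TU_ge0. Qed.

Lemma Ns_ge0 n x : (1 <= n)%N -> 0 <= Ns n x.
Proof. by move=> n1; apply: addr_ge0; [exact: SUPS_ge0 | exact: SUPU_ge0]. Qed.

Lemma Ns_lower n x : (1 <= n)%N -> N x <= Ns n x.
Proof.
move=> n1.
have hs : N (P n *m x) <= SUP (TS n x).
  have := SUPS_ub x n1 n1; rewrite /TS coc_id mul1mx /wS subrr eS_pos //.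
  by rewrite mulr0 expR0 mulr1.
have hu : N ((1%:M - P n) *m x) <= SUP (TU n x).
  have := SUPU_ub x n1 n1; rewrite /TU coc_id mul1mx /wU subrr eU_pos //.
  by rewrite mulr0 oppr0 expR0 mulr1.
have ex : x = P n *m x + (1%:M - P n) *m x.
  by rewrite mulmxBl mul1mx addrC subrK.
apply: (@le_trans _ _ (N (P n *m x) + N ((1%:M - P n) *m x))); last exact: lerD.
by rewrite {1}ex; exact: ND.
Qed.

Lemma Ns_upper n x : (1 <= n)%N -> Ns n x <= (Bn n + Bn n) * N x.
Proof.
move=> n1; rewrite mulrDl; apply: lerD.
- by apply: SUP_le => k k1; exact: TS_bound.
- by apply: SUP_le => k k1; exact: TU_bound.
Qed.

Lemma TS_add n x y k : TS n (x + y) k <= TS n x k + TS n y k.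
Proof.
rewrite /TS !mulmxDr -mulrDl; apply: ler_wpM2r; first exact: expR_ge0.
exact: ND.
Qed.

Lemma TU_add n x y k : TU n (x + y) k <= TU n x k + TU n y k.
Proof.
rewrite /TU !mulmxDr -mulrDl; apply: ler_wpM2r; first exact: expR_ge0.
exact: ND.
Qed.

Lemma TS_scale n (c : R) x k : TS n (c *: x) k = `|c| * TS n x k.
Proof. by rewrite /TS -!scalemxAr NZ // mulrA. Qed.

Lemma TU_scale n (c : R) x k : TU n (c *: x) k = `|c| * TU n x k.
Proof. by rewrite /TU -!scalemxAr NZ // mulrA. Qed.

Lemma Ns_add n x y : (1 <= n)%N -> Ns n (x + y) <= Ns n x + Ns n y.
Proof.
move=> n1; rewrite /Ns addrACA; apply: lerD.
- apply: SUP_le => k k1; apply: le_trans (TS_add _ _ _ _) _.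
  by apply: lerD; exact: SUPS_ub.
- apply: SUP_le => k k1; apply: le_trans (TU_add _ _ _ _) _.
  by apply: lerD; exact: SUPU_ub.
Qed.

Lemma Ns_scale_le n (c : R) x : (1 <= n)%N -> Ns n (c *: x) <= `|c| * Ns n x.
Proof.
move=> n1; rewrite /Ns mulrDr; apply: lerD.
- apply: (@SUP_scale _ _ _ _ (Bn n * N x)) => // k k1; first exact: TS_bound.
  by rewrite TS_scale.
- apply: (@SUP_scale _ _ _ _ (Bn n * N x)) => // k k1; first exact: TU_bound.
  by rewrite TU_scale.
Qed.

Lemma Ns_is_norm n : (1 <= n)%N -> is_norm (Ns n).
Proof.
move=> n1; split.
- by move=> x y; exact: Ns_add.
- move=> c x; apply/eqP; rewrite eq_le Ns_scale_le //=.
  have [->|c0] := eqVneq c 0.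
    by rewrite normr0 mul0r; exact: Ns_ge0.
  rewrite -{1}(scalerK c0 x).
  apply: le_trans (ler_wpM2l (normr_ge0 c) (Ns_scale_le _ _ n1)) _.
  by rewrite mulrA normfV mulfV ?mul1r // normr_eq0.
- move=> x h; apply: (Neq0 hN); apply/eqP; rewrite eq_le Nge0 // andbT.
  by rewrite -h; exact: Ns_lower.
Qed.

Lemma Tw (v : 'cV[R]_d) (w1 w2 p : R) : w1 <= p * w2 -> N v * w1 <= p * (N v * w2).
Proof. by move=> h; rewrite mulrCA; apply: ler_wpM2l => //; exact: Nge0. Qed.

Lemma pw_ge0 p m n : 0 <= pw p m n.
Proof. exact: expR_ge0. Qed.

Section Weights.
Variables (k m n : nat).
Hypotheses (k1 : (1 <= k)%N) (n1 : (1 <= n)%N) (nm : (n <= m)%N).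
Let hLg : Lg R n <= Lg R m. Proof. exact: Lg_le. Qed.

Lemma wS1 : wS k m <= pw (- lam) m n * wS k n.
Proof. by rewrite /wS /pw -expRD ler_expR; apply: W1. Qed.
Lemma wU2 : wU k n <= pw (- lam) m n * wU k m.
Proof. by rewrite /wU /pw -expRD ler_expR; apply: W2. Qed.
Lemma wS3 : wS k m <= pw a m n * wS k n.
Proof. by rewrite /wS /pw -expRD ler_expR; apply: W3. Qed.
Lemma wU4 : wU k m <= pw a m n * wU k n.
Proof. by rewrite /wU /pw -expRD ler_expR; apply: W4. Qed.
Lemma wS5 : wS k n <= pw a m n * wS k m.
Proof. by rewrite /wS /pw -expRD ler_expR; apply: W5. Qed.
Lemma wU6 : wU k n <= pw a m n * wU k m.
Proof. by rewrite /wU /pw -expRD ler_expR; apply: W6. Qed.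
End Weights.

Lemma PP n : (1 <= n)%N -> P n *m P n = P n.
Proof. by move=> n1; case: (hP n1). Qed.

Lemma PQ n : (1 <= n)%N -> P n *m (1%:M - P n) = 0.
Proof. by move=> n1; rewrite mulmxBr mulmx1 PP // subrr. Qed.

Lemma cl1 m n x : (1 <= n)%N -> (n <= m)%N ->
  Ns m (C m n *m P n *m x) <= pw (- lam) m n * Ns n x.
Proof.
move=> n1 nm; have m1 := leq_trans n1 nm.
set y := C m n *m P n *m x.
have Py : P m *m y = C m n *m (P n *m x).
  by rewrite /y !mulmxA -coc_P // -(mulmxA _ (P n) (P n)) PP // -mulmxA.
have Qy : (1%:M - P m) *m y = 0.
  by rewrite mulmxBl mul1mx Py /y -mulmxA subrr.
rewrite /Ns mulrDr.
apply: (@le_trans _ _ (pw (- lam) m n * SUP (TS n x) + 0)); last first.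
  apply: lerD => //; apply: mulr_ge0; [exact: pw_ge0 | exact: SUPU_ge0].
apply: lerD.
- apply: (@SUP_scale _ _ _ _ (Bn n * N x)); first exact: pw_ge0.
    by move=> k k1; exact: TS_bound.
  move=> k k1; rewrite /TS Py mulmxA coc_mul //.
  by apply: Tw; exact: wS1.
- apply: SUP_le => k k1; rewrite /TU Qy mulmx0 N0 // mul0r.
  by [].
Qed.

Lemma cl2 m n x : (1 <= n)%N -> (n <= m)%N ->
  Ns n (C n m *m (1%:M - P m) *m x) <= pw (- lam) m n * Ns m x.
Proof.
move=> n1 nm; have m1 := leq_trans n1 nm.
set y := C n m *m (1%:M - P m) *m x.
have Py : P n *m y = 0.
  by rewrite /y !mulmxA -coc_P // -(mulmxA _ (P m)) PQ // mulmx0 mul0mx.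
have Qy : (1%:M - P n) *m y = C n m *m ((1%:M - P m) *m x).
  by rewrite mulmxBl mul1mx Py subr0 /y mulmxA.
rewrite /Ns mulrDr.
apply: (@le_trans _ _ (0 + pw (- lam) m n * SUP (TU m x))); last first.
  apply: lerD => //; apply: mulr_ge0; [exact: pw_ge0 | exact: SUPS_ge0].
apply: lerD.
- apply: SUP_le => k k1; rewrite /TS Py mulmx0 N0 // mul0r.
  by [].
- apply: (@SUP_scale _ _ _ _ (Bn m * N x)); first exact: pw_ge0.
    by move=> k k1; exact: TU_bound.
  move=> k k1; rewrite /TU Qy mulmxA coc_mul //.
  by apply: Tw; exact: wU2.
Qed.

Lemma cl3 m n x : (1 <= n)%N -> (n <= m)%N ->
  Ns m (C m n *m x) <= pw a m n * Ns n x.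
Proof.
move=> n1 nm; have m1 := leq_trans n1 nm.
have Py : P m *m (C m n *m x) = C m n *m (P n *m x).
  by rewrite !mulmxA -coc_P.
have Qy : (1%:M - P m) *m (C m n *m x) = C m n *m ((1%:M - P n) *m x).
  by rewrite !mulmxA -coc_Q.
rewrite /Ns mulrDr; apply: lerD.
- apply: (@SUP_scale _ _ _ _ (Bn n * N x)); first exact: pw_ge0.
    by move=> k k1; exact: TS_bound.
  move=> k k1; rewrite /TS Py mulmxA coc_mul //.
  by apply: Tw; exact: wS3.
- apply: (@SUP_scale _ _ _ _ (Bn n * N x)); first exact: pw_ge0.
    by move=> k k1; exact: TU_bound.
  move=> k k1; rewrite /TU Qy mulmxA coc_mul //.
  by apply: Tw; exact: wU4.
Qed.

Lemma cl4 m n x : (1 <= n)%N -> (n <= m)%N ->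
  Ns n (C n m *m x) <= pw a m n * Ns m x.
Proof.
move=> n1 nm; have m1 := leq_trans n1 nm.
have Py : P n *m (C n m *m x) = C n m *m (P m *m x).
  by rewrite !mulmxA -coc_P.
have Qy : (1%:M - P n) *m (C n m *m x) = C n m *m ((1%:M - P m) *m x).
  by rewrite !mulmxA -coc_Q.
rewrite /Ns mulrDr; apply: lerD.
- apply: (@SUP_scale _ _ _ _ (Bn m * N x)); first exact: pw_ge0.
    by move=> k k1; exact: TS_bound.
  move=> k k1; rewrite /TS Py mulmxA coc_mul //.
  by apply: Tw; exact: wS5.
- apply: (@SUP_scale _ _ _ _ (Bn m * N x)); first exact: pw_ge0.
    by move=> k k1; exact: TU_bound.
  move=> k k1; rewrite /TU Qy mulmxA coc_mul //.
  by apply: Tw; exact: wU6.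
Qed.

Lemma fwd_main : exists Ns' : nat -> 'cV[R]_d -> R,
    (forall n, (1 <= n)%N -> is_norm (Ns' n)) /\
    strong_poly_dichotomy_wrt Ns' A /\
    exists (C0 delta : R), 0 < C0 /\ 0 <= delta /\
      forall (n : nat) (x : 'cV[R]_d), (1 <= n)%N ->
        N x <= Ns' n x /\ Ns' n x <= C0 * powR n%:R delta * N x.
Proof.
exists Ns; split; first exact: Ns_is_norm.
split.
  exists 1, a, lam, P; split; first by split.
  move=> m n x n1 nm /=; have m1 := leq_trans n1 nm.
  rewrite !mul1r !powR_ratio //; split.
  - exact: cl1.
  - exact: cl2.
  - exact: cl3.
  - exact: cl4.
exists (2 * (K * (1 + K))), (eps + eps); split.
  apply: mulr_gt0; first by [].
  by apply: mulr_gt0 => //; apply: addr_gt0.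
split; first by apply: addr_ge0.
move=> n x n1; split; first exact: Ns_lower.
apply: le_trans (Ns_upper x n1) _.
rewrite powR_nat // (mulrDl eps eps) expRD -/(E n).
apply: ler_wpM2r; first exact: Nge0.
rewrite /Bn; exact: final_ineq (E_ge1 n1).
Qed.

End Fwd.

Lemma chain (R : realType) (u v w K p C0 q Nx : R) :
  u <= v -> v <= K * p * w -> w <= C0 * q * Nx -> 0 <= K * p ->
  u <= K * C0 * p * q * Nx.
Proof.
move=> h1 h2 h3 h4; apply: le_trans h1 _; apply: le_trans h2 _.
rewrite (_ : K * C0 * p * q * Nx = K * p * (C0 * q * Nx)); last by ring.
exact: ler_wpM2l.
Qed.

Unset Implicit Arguments.
Local Open Scope ring_scope.

Theorem proposition2p1 (R : realType) (d : nat) (A : nat -> 'M[R]_d)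
    (N : 'cV[R]_d -> R) :
  (forall n, (1 <= n)%N -> A n \in unitmx) ->
  is_norm N ->
  nonuniform_strong_poly_dichotomy N A <->
  exists Ns : nat -> 'cV[R]_d -> R,
    (forall n, (1 <= n)%N -> is_norm (Ns n)) /\
    strong_poly_dichotomy_wrt Ns A /\
    exists (C delta : R), 0 < C /\ 0 <= delta /\
      forall (n : nat) (x : 'cV[R]_d), (1 <= n)%N ->
        N x <= Ns n x /\ Ns n x <= C * powR n%:R delta * N x.
Proof.
move=> hA hN; split.
  move=> [K [a [lam [eps [P [[hK hlam hla heps hP] H]]]]]].
  exact: (fwd_main hA hN hK hlam hla heps hP H).
move=> [Ns [hNs [[K [a [lam [P [[hK hlam hla hP] H]]]]] [C0 [delta [hC [hd hb]]]]]]].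
exists (K * C0), a, lam, delta, P; split.
  by split => //; apply: mulr_gt0.
move=> m n n1 nm /=; have m1 := leq_trans n1 nm.
have hKp p (r : R) : 0 <= K * powR r p by apply: mulr_ge0; [exact: ltW | exact: powR_ge0].
have hb0 p (r s : R) : 0 <= K * C0 * powR r p * powR s delta.
  by apply: mulr_ge0; [apply: mulr_ge0; [apply: mulr_ge0; exact: ltW | exact: powR_ge0] | exact: powR_ge0].
split; apply: opnorm_ub => // x; have [h1 h2 h3 h4] := H m n x n1 nm.
- apply: chain h1 (proj2 (hb _ _ n1)) (hKp _ _).
  exact: (proj1 (hb _ _ m1)).
- apply: chain h2 (proj2 (hb _ _ m1)) (hKp _ _).
  exact: (proj1 (hb _ _ n1)).
- apply: chain h3 (proj2 (hb _ _ n1)) (hKp _ _).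
  exact: (proj1 (hb _ _ m1)).
- apply: chain h4 (proj2 (hb _ _ m1)) (hKp _ _).
  exact: (proj1 (hb _ _ n1)).
Qed.
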